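(* Assume the standing setting and condition (C) described in the context. Let $(\theta_n)_{n\ge0}$ be a nondecreasing sequence of $\mathbb{G}$-stopping times tending to infinity. Then there exists a nondecreasing sequence $(\sigma_n)_{n\ge0}$ of $\mathbb{F}$-stopping times tending to infinity such that $\theta_n\wedge T\wedge\tau=\sigma_n\wedge T\wedge\tau$ for all $n$.
   Context: Standing setting: $(\Omega,\mathcal{A},\mathbb{Q})$ is a probability space, $\mathbb{G}=(\mathfrak{G}_t)_{t\ge0}$ a filtration satisfying the usual conditions, $\mathbb{F}=(\mathfrak{F}_t)_{t\ge0}$ a subfiltration of $\mathbb{G}$ satisfying the usual conditions, and $\tau$ a strictly positive (possibly infinite) $\mathbb{G}$-stopping time such that for every $t\ge0$ and $B\in\mathfrak{G}_t$ there is $B'\in\mathfrak{F}_t$ with $B\cap\{t<\tau\}=B'\cap\{t<\tau\}$. For a càdlàg process $X$, $X^{\tau-}=X1_{[0,\tau)}+X_{\tau-}1_{[\tau,\infty)}$. A constant $T>0$ is fixed. Condition (C): (a) $\tau$ has a $(\mathbb{G},\mathbb{Q})$ intensity $\gamma1_{(0,\tau]}$ with $\gamma$ nonnegative $\mathbb{F}$-predictable; (b) $S_t=\mathbb{Q}(\tau>t\mid\mathfrak{F}_t)$ satisfies $S_T>0$ a.s.; (c) there is a probability measure $\mathbb{P}$ equivalent to $\mathbb{Q}$ on $\mathfrak{F}_T$ such that for every $(\mathbb{F},\mathbb{P})$ local martingale $P$, $P^{\tau-}$ is a $(\mathbb{G},\mathbb{Q})$ local martingale on $[0,T]$. *)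

(* Defs.v *)
From HB Require Import structures.
From mathcomp Require Import all_boot all_order all_algebra.
From mathcomp Require Import all_classical all_reals all_analysis.
Set Implicit Arguments. Unset Strict Implicit. Unset Printing Implicit Defensive.
Import Order.TTheory GRing.Theory Num.Theory.
Import numFieldNormedType.Exports.
Local Open Scope classical_set_scope.
Local Open Scope ring_scope.

Section Stoch.
Context {R : realType} {d : measure_display} {Omega : measurableType d}.

(* A continuous-time filtration: F t is a sub-sigma-algebra of the ambient one,
   indexed by t >= 0 (values at t < 0 are irrelevant). *)
Definition filtration (F : R -> set (set Omega)) : Prop :=
  (forall t, 0 <= t -> sigma_algebra setT (F t) /\ (F t `<=` measurable)) /\
  (forall s t, 0 <= s -> s <= t -> F s `<=` F t).

Definition usual_conditions (Q : probability Omega R) (F : R -> set (set Omega)) : Prop :=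
  filtration F /\
  (forall t, 0 <= t -> forall A, (forall u, t < u -> F u A) -> F t A) /\
  (forall N, (exists M, measurable M /\ Q M = 0%E /\ N `<=` M) -> F 0 N).

Definition subfiltration (F G : R -> set (set Omega)) : Prop :=
  forall t, 0 <= t -> F t `<=` G t.

Definition stopping_time (F : R -> set (set Omega)) (th : Omega -> \bar R) : Prop :=
  (forall w, (0 <= th w)%E) /\
  (forall t, 0 <= t -> F t [set w | (th w <= t%:E)%E]).

Definition measurable_wrt (A : set (set Omega)) (X : Omega -> R) : Prop :=
  forall B : set R, measurable B -> A (X @^-1` B).

Definition adapted (F : R -> set (set Omega)) (X : R -> Omega -> R) : Prop :=
  forall t, 0 <= t -> measurable_wrt (F t) (X t).

Definition cadlag_path (f : R -> R) : Prop :=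
  (forall t, 0 <= t -> f x @[x --> t^'+] --> f t) /\
  (forall t, 0 < t -> cvg (f x @[x --> t^'-])).

Definition is_condexp (P : probability Omega R) (A : set (set Omega))
    (X Y : Omega -> R) : Prop :=
  measurable_wrt A Y /\ P.-integrable setT (fun w => (Y w)%:E) /\
  forall B, A B -> (\int[P]_(w in B) (Y w)%:E = \int[P]_(w in B) (X w)%:E)%E.

Definition martingale (F : R -> set (set Omega)) (P : probability Omega R)
    (M : R -> Omega -> R) : Prop :=
  adapted F M /\
  (forall t, 0 <= t -> P.-integrable setT (fun w => (M t w)%:E)) /\
  (forall s t, 0 <= s -> s <= t -> forall B, F s B ->
     (\int[P]_(w in B) (M t w)%:E = \int[P]_(w in B) (M s w)%:E)%E).

Definition stopped (X : R -> Omega -> R) (th : Omega -> \bar R) : R -> Omega -> R :=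
  fun t w => X (fine (Order.min t%:E (th w))) w.

Definition local_martingale (F : R -> set (set Omega)) (P : probability Omega R)
    (M : R -> Omega -> R) : Prop :=
  {ae P, forall w, cadlag_path (fun t => M t w)} /\ adapted F M /\
  exists Tn : nat -> Omega -> \bar R,
    (forall n, stopping_time F (Tn n)) /\
    (forall n w, (Tn n w <= Tn n.+1 w)%E) /\
    {ae P, forall w, (fun n => Tn n w) @ \oo --> +oo%E} /\
    (forall n, martingale F P (stopped M (Tn n))).

(* local martingale on [0, T]: the process stopped at the deterministic time T *)
Definition local_martingale_on (F : R -> set (set Omega)) (P : probability Omega R)
    (T : R) (M : R -> Omega -> R) : Prop :=
  local_martingale F P (stopped M (fun _ => T%:E)).

(* X^{tau-} = X 1_[0,tau) + X_{tau-} 1_[tau,oo) *)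
Definition prestopped (X : R -> Omega -> R) (tau : Omega -> \bar R) : R -> Omega -> R :=
  fun t w => if (t%:E < tau w)%E then X t w
             else lim (X s w @[s --> (fine (tau w))^'-]).

Definition pred_domain : set (R * Omega) := [set p | 0 <= p.1].
Definition predictable_rectangles (F : R -> set (set Omega)) : set (set (R * Omega)) :=
  [set C | exists B, F 0 B /\ C = [set p | p.1 = 0 /\ B p.2]] `|`
  [set C | exists s t B, [/\ 0 <= s, s <= t, F s B &
                           C = [set p | s < p.1 <= t /\ B p.2]]].
Definition predictable (F : R -> set (set Omega)) (g : R -> Omega -> R) : Prop :=
  forall B : set R, measurable B ->
    <<s pred_domain, predictable_rectangles F >>
      (pred_domain `&` [set p | B (g p.1 p.2)]).

Definition compensator_ext (gamma : R -> Omega -> R) (tau : Omega -> \bar R)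
    (t : R) (w : Omega) : \bar R :=
  \int[lebesgue_measure]_(s in [set s : R | (0 < s <= t)%R])
     ((gamma s w)%:E * (\1_[set s : R | (s%:E <= tau w)%E] s : R)%:E)%E.

Definition has_intensity (G : R -> set (set Omega)) (Q : probability Omega R)
    (tau : Omega -> \bar R) (gamma : R -> Omega -> R) : Prop :=
  {ae Q, forall w, forall t, 0 <= t -> compensator_ext gamma tau t w \is a fin_num} /\
  local_martingale G Q
    (fun t w => (\1_[set w' | (tau w' <= t%:E)%E] w : R) - fine (compensator_ext gamma tau t w)).

Definition condition_C (F G : R -> set (set Omega)) (Q : probability Omega R)
    (tau : Omega -> \bar R) (T : R) : Prop :=
  [/\ exists gamma : R -> Omega -> R,
        (forall t w, 0 <= gamma t w) /\ predictable F gamma /\ has_intensity G Q tau gamma,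
      (forall S : Omega -> R,
         is_condexp Q (F T) (fun w => (\1_[set w' | (T%:E < tau w')%E] w : R)) S ->
         {ae Q, forall w, 0 < S w}) &
      exists P : probability Omega R,
        (forall A, F T A -> (P A = 0%E <-> Q A = 0%E)) /\
        (forall X, local_martingale_on F P T X ->
                   local_martingale_on G Q T (prestopped X tau))].

End Stoch.

(* Main.v *)
Require Import Defs.
From HB Require Import structures.
From mathcomp Require Import all_boot all_order all_algebra.
From mathcomp Require Import all_classical all_reals all_analysis.
From mathcomp Require Import measurable_realfun.
Import Order.TTheory GRing.Theory Num.Theory.
Import numFieldNormedType.Exports.
Local Open Scope classical_set_scope.
Local Open Scope ring_scope.

Definition trP {d} {Omega : measurableType d} {R : realType}
  (P : probability Omega R) (G : set (set Omega)) (hG : <<s G >> `<=` measurable)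
  : set (g_sigma_algebraType G) -> \bar R := fun A => P A.

Lemma trP0 d (Omega : measurableType d) (R : realType) (P : probability Omega R) G hG :
  @trP d Omega R P G hG set0 = 0%E.
Proof. exact: measure0. Qed.

Lemma trP_ge0 d (Omega : measurableType d) (R : realType) (P : probability Omega R) G hG A :
  (0 <= @trP d Omega R P G hG A)%E.
Proof. exact: measure_ge0. Qed.

Lemma trP_sa d (Omega : measurableType d) (R : realType) (P : probability Omega R) G hG :
  semi_sigma_additive (@trP d Omega R P G hG).
Proof.
move=> F mF tF mU; apply: (@measure_semi_sigma_additive _ _ _ P) => //.
- by move=> n; apply: hG; exact: mF.
- exact: hG.
Qed.

HB.instance Definition _ d (Omega : measurableType d) (R : realType) (P : probability Omega R) G hG :=
  isMeasure.Build _ _ _ (@trP d Omega R P G hG) (@trP0 _ _ _ P G hG) (@trP_ge0 _ _ _ P G hG) (@trP_sa _ _ _ P G hG).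

Lemma trP_setT d (Omega : measurableType d) (R : realType) (P : probability Omega R) G hG :
  @trP d Omega R P G hG setT = 1%E.
Proof. exact: probability_setT. Qed.

HB.instance Definition _ d (Omega : measurableType d) (R : realType) (P : probability Omega R) G hG :=
  Measure_isProbability.Build _ _ _ (@trP d Omega R P G hG) (@trP_setT _ _ _ P G hG).

Definition trC {d} {Omega : measurableType d} {R : realType}
  (nu : charge Omega R) (G : set (set Omega)) (hG : <<s G >> `<=` measurable)
  : set (g_sigma_algebraType G) -> \bar R := fun A => nu A.

Lemma trC0 d (Omega : measurableType d) (R : realType) (nu : charge Omega R) G hG :
  @trC d Omega R nu G hG set0 = 0%E.
Proof. exact: charge0. Qed.

Lemma trC_fin d (Omega : measurableType d) (R : realType) (nu : charge Omega R) G hG A :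
  measurable A -> @trC d Omega R nu G hG A \is a fin_num.
Proof. by move=> mA; apply: fin_num_measure; exact: hG. Qed.

Lemma trC_sa d (Omega : measurableType d) (R : realType) (nu : charge Omega R) G hG :
  semi_sigma_additive (@trC d Omega R nu G hG).
Proof.
move=> F mF tF mU; apply: (@charge_semi_sigma_additive _ _ _ nu) => //.
- by move=> n; apply: hG; exact: mF.
- exact: hG.
Qed.

HB.instance Definition _ d (Omega : measurableType d) (R : realType) (nu : charge Omega R) G hG :=
  isCharge.Build _ _ _ (@trC d Omega R nu G hG) (@trC0 _ _ _ nu G hG) (@trC_fin _ _ _ nu G hG) (@trC_sa _ _ _ nu G hG).


Lemma condexp_exists d (Omega : measurableType d) (R : realType) (Q : probability Omega R)
  (G : set (set Omega)) (sG : sigma_algebra setT G) (hG : G `<=` measurable)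
  (X : Omega -> R) (intX : Q.-integrable setT (fun w => (X w)%:E)) :
  exists Y, is_condexp Q G X Y.
Proof.
have hG' : <<s G >> `<=` @measurable _ Omega by rewrite sigma_algebra_id.
pose nu : {charge set g_sigma_algebraType G -> \bar R} :=
  @trC _ _ _ (induced_charge intX) G hG'.
pose mu : {sigma_finite_measure set g_sigma_algebraType G -> \bar R} :=
  @trP _ _ _ Q G hG'.
have numu : nu `<< mu.
  apply/null_content_dominatesP => A mA muA0.
  rewrite /nu /trC /induced_charge /=.
  apply: null_set_integral => //; first exact (hG' _ mA).
  apply: (measurable_funS measurableT (@subsetT _ (A : set Omega))).
  exact: (measurable_int _ intX).
pose f := Radon_Nikodym nu mu.
have ffin x : f x \is a fin_num by exact: (Radon_Nikodym_fin_num x numu).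
have intf : mu.-integrable setT f by exact: (Radon_Nikodym_integrable numu).
have mf := measurable_int _ intf.
have mid : measurable_fun [set: Omega] (fun x : Omega => (x : g_sigma_algebraType G)).
  by move=> _ B mB; rewrite setTI; apply hG'.
have mfO := measurableT_comp mf mid.
have pushE : pushforward Q (fun x : Omega => (x : g_sigma_algebraType G)) = mu by [].
have intfO : Q.-integrable setT (f \o (fun x : Omega => (x : g_sigma_algebraType G))).
  apply/integrableP; split => //.
  move/integrableP : intf => [_]; rewrite -pushE ge0_integral_pushforward//.
  - exact: measurableT_comp.
exists (fun w => fine (f w)); split; [|split].
- move=> B mB.
  have mY : measurable_fun setT (fun x => fine (f x)) by exact: measurableT_comp.
  have := mY measurableT B mB.
  by rewrite setTI => h; rewrite -(sigma_algebra_id sG); exact: h.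
- have -> : (fun w => (fine (f w))%:E) = (f \o (fun x : Omega => (x : g_sigma_algebraType G))).
    by apply/funext => w; rewrite fineK.
  exact: intfO.
- move=> B GB.
  have mB : measurable (B : set (g_sigma_algebraType G)).
    by rewrite /measurable /= (sigma_algebra_id sG).
  transitivity (\int[Q]_(w in B) f w)%E.
    by apply: eq_integral => w _; rewrite fineK.
  transitivity (\int[mu]_(w in B) f w)%E.
    rewrite -pushE integral_pushforward//.
    by apply: integrableS intfO => //; exact: hG.
  by rewrite /f -(Radon_Nikodym_integral numu mB).
Qed.

Lemma null_from_C d (Omega : measurableType d) (R : realType) (Q : probability Omega R)
  (G : set (set Omega)) (sG : sigma_algebra setT G) (hG : G `<=` measurable)
  (Z : set Omega) (mZ : measurable Z)
  (HS : forall S, is_condexp Q G (fun w => (\1_Z w : R)) S -> {ae Q, forall w, 0 < S w})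
  (A : set Omega) (GA : G A) (h0 : Q (A `&` Z) = 0%E) : Q A = 0%E.
Proof.
have mA : measurable A := hG _ GA.
have intZ : Q.-integrable setT (fun w => (\1_Z w : R)%:E) by exact: integrable_indic.
have [Y [mY [intY eqY]]] := @condexp_exists _ _ _ Q G sG hG _ intZ.
have [N [mN QN0 HN]] := HS Y (conj mY (conj intY eqY)).
have mYE : measurable_fun setT (fun w => (Y w)%:E) := measurable_int _ intY.
have I0 : (\int[Q]_(w in A) (Y w)%:E = 0)%E.
  by rewrite eqY // integral_indic // setIC.
have Iabs : (\int[Q]_(w in A) `|(Y w)%:E| = 0)%E.
  rewrite -I0; apply: ae_eq_integral => //.
  - by apply: measurableT_comp => //; exact: measurable_funTS.
  - exact: measurable_funTS.
  - exists N; split => // w /= hw; apply: HN => /= hY; apply: hw => _.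
    by rewrite ger0_norm // ltW.
have [N2 [mN2 QN20 HN2]] := (ae_eq_integral_abs _ mA (measurable_funTS mYE)).1 Iabs.
apply: (@subset_measure0 _ _ _ Q A (N `|` N2)) => //; first exact: measurableU.
- move=> w Aw; have [Nw|Nw] := pselect (N w); first by left.
  right; apply: HN2 => /= hw.
  have Yp : 0 < Y w by apply: contra_notP Nw => h; exact: HN.
  by move: (hw Aw) => [] /eqP; rewrite gt_eqF.
- exact: (etrans (measureU0 mN mN2 QN20) QN0).
Qed.

Lemma sa_setT T (G : set (set T)) : sigma_algebra setT G -> G setT.
Proof. by case=> G0 GC _; rewrite -(setD0 setT); exact: GC. Qed.

Lemma sa_bigcap T (G : set (set T)) (A : (set T)^nat) :
  sigma_algebra setT G -> (forall k, G (A k)) -> G (\bigcap_k A k).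
Proof.
move=> [G0 GC GU] GA.
have -> : \bigcap_k A k = setT `\` \bigcup_k (setT `\` A k).
  apply/seteqP; split => [w Aw|w [_ h] k _].
    by split => // -[k _ [_ nAk]]; exact: nAk (Aw k I).
  by apply: contrapT => nA; apply: h; exists k => //.
by apply GC; apply: GU => k; exact: GC.
Qed.

Lemma invS_le (R : realType) (k K : nat) : ((k + K).+1%:R^-1 : R) <= K.+1%:R^-1.
Proof. by rewrite lef_pV2 ?posrE ?ltr0Sn // ler_nat ltnS leq_addl. Qed.

Section construction.
Context (R : realType) (d : measure_display) (Omega : measurableType d).
Variables (F : R -> set (set Omega)) (tau : Omega -> \bar R) (T : R)
  (theta : nat -> Omega -> \bar R) (Bp : nat -> rat -> set Omega).
Hypothesis HFsa : forall t, 0 <= t -> sigma_algebra setT (F t).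
Hypothesis HFmono : forall s t, 0 <= s -> s <= t -> F s `<=` F t.
Hypothesis HFrc : forall t, 0 <= t -> forall A, (forall u, t < u -> F u A) -> F t A.
Hypothesis HT : 0 < T.
Hypothesis Htau_pos : forall w, (0 < tau w)%E.
Hypothesis Hth0 : forall n w, (0 <= theta n w)%E.
Hypothesis Htheta_mono : forall n w, (theta n w <= theta n.+1 w)%E.
Hypothesis HBpF : forall n q, 0 <= (ratr q : R) -> F (ratr q) (Bp n q).
Hypothesis HBpE : forall n q w, 0 <= (ratr q : R) -> ((ratr q)%:E < tau w)%E ->
  (Bp n q w <-> (theta n w <= (ratr q)%:E)%E).

Definition qs (j : nat) : rat := odflt 0 (unpickle j).
Lemma qsK q : qs (pickle q) = q.
Proof. by rewrite /qs pickleK. Qed.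

Definition Ufun n q j : set Omega :=
  if (0 <= (ratr (qs j) : R)) && ((ratr (qs j) : R) <= ratr q) then Bp n (qs j) else set0.
Definition U n q : set Omega := \bigcup_j Ufun n q j.
Definition D n q : set Omega := \bigcap_m (if (m <= n)%N then U m q else setT).

Lemma U_F n q u : 0 <= u -> (ratr q : R) <= u -> F u (U n q).
Proof.
move=> u0 qu; have [G0 _ GU] := HFsa _ u0; apply: GU => j; rewrite /Ufun.
case: ifP => [/andP[h0 h1]|_ //].
apply: (HFmono _ _ h0 (le_trans h1 qu)); exact: HBpF.
Qed.

Lemma D_F n q u : 0 <= u -> (ratr q : R) <= u -> F u (D n q).
Proof.
move=> u0 qu; apply: sa_bigcap; first exact: (HFsa _ u0).
move=> m; case: ifP => _; first exact: U_F.
exact: sa_setT (HFsa _ u0).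
Qed.

Lemma theta_homo w m n : (m <= n)%N -> (theta m w <= theta n w)%E.
Proof.
move=> mn; have /nondecreasing_seqP h : forall k, (theta k w <= theta k.+1 w)%E by [].
exact: h.
Qed.

Lemma memU n q w : 0 <= (ratr q : R) -> ((ratr q)%:E < tau w)%E ->
  (U n q w <-> (theta n w <= (ratr q)%:E)%E).
Proof.
move=> q0 qt; split.
- move=> [j _]; rewrite /Ufun; case: ifP => [/andP[h0 h1] hB|_ //].
  have hq : ((ratr (qs j))%:E < tau w)%E by rewrite (le_lt_trans _ qt) // lee_fin.
  by rewrite (le_trans ((HBpE n _ w h0 hq).1 hB)) // lee_fin.
- move=> h; exists (pickle q) => //; rewrite /Ufun qsK q0 lexx /=.
  exact: (HBpE n _ w q0 qt).2.
Qed.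

Lemma memD n q w : 0 <= (ratr q : R) -> ((ratr q)%:E < tau w)%E ->
  (D n q w <-> (theta n w <= (ratr q)%:E)%E).
Proof.
move=> q0 qt; split.
- by move=> h; have := h n I; rewrite leqnn => /(memU _ _ _ q0 qt).
- move=> h m _; case: ifP => // mn; apply/(memU _ _ _ q0 qt).
  exact: (le_trans (theta_homo w _ _ mn) h).
Qed.

Definition Sset n w : set (\bar R) :=
  (fun q : rat => ((ratr q : R)%:E)) @` [set q : rat | 0 <= (ratr q : R) /\ ratr q < T /\ D n q w].
Definition sigma n w : \bar R := ereal_inf (Sset n w).

Lemma sigma_ge0 n w : (0 <= sigma n w)%E.
Proof. by apply: le_ereal_inf_tmp => _ [q [q0 _] <-]; rewrite lee_fin. Qed.

Lemma sigma_mono n w : (sigma n w <= sigma n.+1 w)%E.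
Proof.
apply: ereal_inf_le_tmp => _ [q [q0 [qT hD]] <-]; exists q => //; split => //; split => //.
move=> m _; case: ifP => // mn; have := hD m I; rewrite (leq_trans mn (leqnSn n)) //.
Qed.

Definition Vset n (v : R) : set Omega :=
  \bigcup_j (if [&& 0 <= (ratr (qs j) : R), (ratr (qs j) : R) < T & (ratr (qs j) : R) < v]
             then D n (qs j) else set0).

Lemma Vset_F n v u : 0 <= u -> v <= u -> F u (Vset n v).
Proof.
move=> u0 vu; have [G0 _ GU] := HFsa _ u0; apply: GU => j.
case: ifP => [/and3P[h0 h1 h2]|_ //].
by apply: D_F => //; exact: (le_trans (ltW h2) vu).
Qed.

Lemma sigma_ltE n v : [set w | (sigma n w < v%:E)%E] = Vset n v.
Proof.
apply/seteqP; split => w /=.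
- move/ereal_inf_lt => [_ [q [q0 [qT hD]] <-]]; rewrite lte_fin => qv.
  by exists (pickle q) => //; rewrite qsK q0 qT qv.
- move=> [j _]; case: ifP => [/and3P[h0 h1 h2] hD|//].
  have hS : Sset n w (ratr (qs j))%:E by exists (qs j).
  by apply: (le_lt_trans (ereal_inf_lbound hS)); rewrite lte_fin.
Qed.

Lemma sigma_stop n : stopping_time F (sigma n).
Proof.
split; first by move=> w; exact: sigma_ge0.
move=> t t0; apply: HFrc => // u tu.
have [K hK] := ltr_add_invr tu.
have -> : [set w | (sigma n w <= t%:E)%E] = \bigcap_k Vset n (t + (k + K).+1%:R^-1).
  apply/seteqP; split => w /=.
  - move=> h k _; rewrite -sigma_ltE /=; apply: (le_lt_trans h).
    by rewrite lte_fin ltrDl invr_gt0 ltr0Sn.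
  - move=> h; apply/lee_addgt0Pr => e e0.
    have [k hk] := ltr_add_invr e0.
    have := h k I; rewrite -sigma_ltE /= => /ltW/le_trans; apply.
    rewrite -EFinD lee_fin lerD2l; apply: le_trans (ltW hk).
    by rewrite add0r addnC; exact: invS_le.
apply: sa_bigcap; first exact: (HFsa _ (ltW (le_lt_trans t0 tu))).
move=> k; apply: Vset_F; first exact: (ltW (le_lt_trans t0 tu)).
apply: le_trans (ltW hK); rewrite lerD2l; exact: invS_le.
Qed.

Lemma sigma_min n w : Order.min (Order.min (theta n w) T%:E) (tau w) =
  Order.min (Order.min (sigma n w) T%:E) (tau w).
Proof.
rewrite -!minA; set a := Order.min T%:E (tau w).
have aT : (a <= T%:E)%E by rewrite ge_min lexx.
have atau : (a <= tau w)%E by rewrite ge_min lexx orbT.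
have key q : 0 <= (ratr q : R) -> ((ratr q)%:E < a)%E ->
    (D n q w <-> (theta n w <= (ratr q)%:E)%E).
  by move=> q0 qa; apply: memD => //; exact: (lt_le_trans qa atau).
have qT q : ((ratr q)%:E < a)%E -> (ratr q : R) < T.
  by move=> qa; rewrite -lte_fin; exact: (lt_le_trans qa aT).
apply/le_anti/andP; split.
- rewrite le_min (ge_min a) lexx orbT andbT.
  apply: le_ereal_inf_tmp => _ [q [q0 [qT' hD]] <-].
  case: (ltP (ratr q)%:E a) => h.
  + by rewrite ge_min (key q q0 h).1.
  + by rewrite ge_min h orbT.
- case: (leP a (theta n w)) => ha.
  + by rewrite (ge_min a) lexx orbT.
  + rewrite (ge_min (theta n w)); apply/orP; left.
    have thfin : theta n w \is a fin_num.
      by rewrite ge0_fin_numE // (lt_le_trans ha (le_trans aT (leey _))).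
    have a0 : (0 <= a)%E by rewrite le_min lee_fin (ltW HT) (ltW (Htau_pos w)).
    have afin : a \is a fin_num.
      by rewrite ge0_fin_numE // (le_lt_trans aT (ltry _)).
    have th0 : 0 <= fine (theta n w) by rewrite fine_ge0.
    have tha : fine (theta n w) < fine a.
      by rewrite -lte_fin !fineK.
    rewrite -(fineK thfin); apply/lee_addgt0Pr => e e0.
    have hlt : fine (theta n w) < Num.min (fine a) (fine (theta n w) + e).
      by rewrite lt_min tha ltrDl e0.
    have [q] := rat_in_itvoo hlt; rewrite in_itv /= => /andP[hq1].
    rewrite lt_min => /andP[hqa hqe].
    have qa : ((ratr q)%:E < a)%E by rewrite -(fineK afin) lte_fin.
    have q0 : 0 <= (ratr q : R) by exact: (le_trans th0 (ltW hq1)).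
    apply: (@le_trans _ _ (ratr q)%:E).
      apply: ereal_inf_lbound; exists q => //; split => //; split; first exact: qT.
      by apply/(key q q0 qa); rewrite -(fineK thfin) lee_fin ltW.
    by rewrite -EFinD lee_fin ltW.
Qed.

Lemma sigma_infty n w : (T%:E <= sigma n w)%E -> sigma n w = +oo%E.
Proof.
move=> h; apply/ereal_inf_pinfty => _ [q [q0 [qT hD]] <-]; exfalso.
have hS : Sset n w (ratr q)%:E by exists q.
have := le_trans h (ereal_inf_lbound hS); rewrite lee_fin leNgt qT //.
Qed.

End construction.

Theorem lemma5p1 (R : realType) (d : measure_display) (Omega : measurableType d)
  (Q : probability Omega R) (G F : R -> set (set Omega))
  (tau : Omega -> \bar R) (T : R)
  (HG : usual_conditions Q G) (HF : usual_conditions Q F)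
  (HFG : subfiltration F G)
  (Htau : stopping_time G tau) (Htau_pos : forall w, (0 < tau w)%E)
  (Hred : forall t, 0 <= t -> forall B, G t B ->
            exists B', F t B' /\
              B `&` [set w | (t%:E < tau w)%E] = B' `&` [set w | (t%:E < tau w)%E])
  (HT : 0 < T)
  (HC : condition_C F G Q tau T)
  (theta : nat -> Omega -> \bar R)
  (Htheta : forall n, stopping_time G (theta n))
  (Htheta_mono : forall n w, (theta n w <= theta n.+1 w)%E)
  (Htheta_inf : {ae Q, forall w, (fun n => theta n w) @ \oo --> +oo%E}) :
  exists sigma : nat -> Omega -> \bar R,
    [/\ forall n, stopping_time F (sigma n),
        forall n w, (sigma n w <= sigma n.+1 w)%E,
        {ae Q, forall w, (fun n => sigma n w) @ \oo --> +oo%E} &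
        forall n, {ae Q, forall w,
          Order.min (Order.min (theta n w) T%:E) (tau w) =
          Order.min (Order.min (sigma n w) T%:E) (tau w)}].

Proof.
case: HF => [[HFs HFmono] [HFrc _]].
case: HG => [[HGs _] _].
have HFsa : forall t, 0 <= t -> sigma_algebra setT (F t).
  by move=> t t0; exact: (HFs t t0).1.
have HFmeas : forall t, 0 <= t -> F t `<=` measurable.
  by move=> t t0; exact: (HFs t t0).2.
have HGmeas : forall t, 0 <= t -> G t `<=` measurable.
  by move=> t t0; exact: (HGs t t0).2.
case: HC => _ HS _.
have Hth0 n w : (0 <= theta n w)%E by exact: (Htheta n).1.
have h : forall p : nat * rat, exists B : set Omega, 0 <= (ratr p.2 : R) ->
    F (ratr p.2) B /\
    [set w | (theta p.1 w <= (ratr p.2)%:E)%E] `&` [set w | ((ratr p.2)%:E < tau w)%E] =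
    B `&` [set w | ((ratr p.2)%:E < tau w)%E].
  move=> [n q] /=; case: (boolP (0 <= (ratr q : R))) => q0; last first.
    by exists set0; move: q0 => /negP q0 q0'; exfalso; exact: q0.
  have [B' [FB' E]] := Hred _ q0 _ ((Htheta n).2 _ q0).
  by exists B'.
have [f hf] := choice h.
pose Bp n q := f (n, q).
have HBpF : forall n q, 0 <= (ratr q : R) -> F (ratr q) (Bp n q).
  by move=> n q q0; exact: (hf (n, q) q0).1.
have HBpE : forall n q w, 0 <= (ratr q : R) -> ((ratr q)%:E < tau w)%E ->
    (Bp n q w <-> (theta n w <= (ratr q)%:E)%E).
  move=> n q w q0 qt; have [_ E] := hf (n, q) q0; simpl in E; split => hw.
  - have : (Bp n q `&` [set w | ((ratr q)%:E < tau w)%E]) w by split.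
    by rewrite /Bp -E => -[].
  - have : ([set w | (theta n w <= (ratr q)%:E)%E] `&`
            [set w | ((ratr q)%:E < tau w)%E]) w by split.
    by rewrite E => -[].
pose sig := @sigma R d Omega T Bp.
have Hmin := @sigma_min R d Omega tau T theta Bp HT Htau_pos Hth0 Htheta_mono HBpE.
have T0 : 0 <= T := ltW HT.
exists sig; split.
- move=> n; exact: (@sigma_stop R d Omega F T Bp HFsa HFmono HFrc HBpF n).
- move=> n w; exact: sigma_mono.
- pose A := \bigcap_n [set w | (sig n w < T%:E)%E].
  have FA : F T A.
    apply: sa_bigcap; first exact: HFsa.
    move=> n; rewrite /sig sigma_ltE.
    exact: (@Vset_F R d Omega F T Bp HFsa HFmono HBpF n T T T0 (lexx _)).
  have mZ : measurable [set w | (T%:E < tau w)%E].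
    have mC := HGmeas _ T0 _ (Htau.2 T T0).
    rewrite (_ : [set w | (T%:E < tau w)%E] = ~` [set w | (tau w <= T%:E)%E]).
      exact: measurableC.
    by apply/seteqP; split => w /=; rewrite ltNge => /negP.
  have QA : Q A = 0%E.
    apply: (@null_from_C _ _ _ Q (F T) (HFsa _ T0) (HFmeas _ T0) _ mZ HS A FA).
    have [N [mN QN HN]] := Htheta_inf.
    apply: (@subset_measure0 _ _ _ Q (A `&` [set w | (T%:E < tau w)%E]) N) => //.
      exact: measurableI (HFmeas _ T0 _ FA) mZ.
    move=> w [Aw Zw]; apply: HN => /= hconv.
    have /cvgeyPge/(_ T) := hconv => hnear.
    have [K0 _ HK0] : exists2 K0 : nat, True & forall n, (K0 <= n)%N -> (T%:E <= theta n w)%E by exact: hnear.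
    have thT : (T%:E <= theta K0 w)%E by exact: HK0.
    have sT : (sig K0 w < T%:E)%E by exact: Aw.
    have := Hmin K0 w.
    rewrite (min_r thT) (min_l (ltW Zw)) (min_l (ltW sT)) (min_l (ltW (lt_trans sT Zw))).
    by move=> E; move: sT; rewrite -E ltxx.
  exists A; split => //; first exact: (HFmeas _ T0 _ FA).
  move=> w /= hnc; apply: contrapT => nA; apply: hnc.
  have [n hn] : exists n, ~ (sig n w < T%:E)%E.
    apply: contrapT => hall; apply: nA => n _; apply: contrapT => hn; apply: hall.
    by exists n.
  have oo : forall m, (n <= m)%N -> sig m w = +oo%E.
    move=> m nm.
    have hinf : sig n w = +oo%E.
      by apply: sigma_infty; rewrite leNgt; apply/negP.
    have /nondecreasing_seqP homo : forall k, (sig k w <= sig k.+1 w)%E.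
      by move=> k; exact: sigma_mono.
    by apply/eqP; rewrite eq_le leey /= -hinf; exact: homo.
  by apply/cvgeyPge => B; exists n => // m /= nm; rewrite oo // leey.
- by move=> n; apply: aeW => w; exact: Hmin.
Qed.
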